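(* The bracket on $\mathbb{R}^2$ determined by \[ \{\Omega_1,\Omega_2\} := -\frac{I_{13}\Omega_1 + I_{23}\Omega_2 + B_3}{I_{11} I_{22}} \] coincides with the reduced nonholonomic bracket $\{\cdot,\cdot\}_{\widehat{\mathcal{D}^*}}$ on $\widehat{\mathcal{D}^*}=\mathcal{D}^*/SO(3)\cong\mathbb{R}^2$, expressed in the coordinates $(\Omega_1,\Omega_2)$.
   Context: Suslov problem with a gyrostat: configuration space $Q=SO(3)$, with $\Omega=(\Omega_1,\Omega_2,\Omega_3)$ the body angular velocity. The Lagrangian is $L=\frac12(\mathbb{I}\Omega)\cdot\Omega + B\cdot\Omega$, where $B=(B_1,B_2,B_3)\in\mathbb{R}^3$ is the constant angular momentum of the gyrostat and the inertia tensor is \[ \mathbb{I}=\begin{pmatrix} I_{11} & 0 & I_{13}\\ 0 & I_{22} & I_{23}\\ I_{13} & I_{23} & I_{33}\end{pmatrix}. \] The kinetic term defines a Riemannian metric $g$ on $Q$ and the linear term defines a gyroscopic 1-form $\eta$. The nonholonomic constraint $\Omega_3=0$ defines a left-invariant, non-integrable rank-2 distribution $\mathcal{D}\subset TQ$. Using $g$, $\mathcal{D}^*$ is identified with the annihilator of $\mathcal{D}^\perp$ in $T^*Q$, $\eta=\eta^\parallel+\eta^\perp$ is decomposed accordingly, $i_\mathcal{D}^*:T^*Q\to\mathcal{D}^*$ is the projection, $\mathcal{P}^*:\mathcal{D}^*\hookrightarrow T^*Q$ the inclusion, and $\tau_{\mathcal{D}^*}:\mathcal{D}^*\to Q$ the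 bundle projection. The nonholonomic bracket on $\mathcal{D}^*$ is $\{\varphi,\psi\}_{\mathcal{D}^*}:=\{\varphi\circ i_\mathcal{D}^*,\psi\circ i_\mathcal{D}^*\}\circ(\mathcal{P}^*+\eta^\perp\circ\tau_{\mathcal{D}^*})$, with $\{\cdot,\cdot\}$ the canonical Poisson bracket on $T^*Q$. $SO(3)$ acts on $Q$ by left multiplication, preserving $L$ and $\mathcal{D}$; the bracket is invariant and descends to a reduced bracket $\{\cdot,\cdot\}_{\widehat{\mathcal{D}^*}}$ on $\widehat{\mathcal{D}^*}=\mathcal{D}^*/SO(3)\cong\mathbb{R}^2$. If $p_1,p_2$ are the quasi-momenta associated with a left-invariant adapted frame, then on the constraint space $\Omega_1=(p_1-B_1)/I_{11}$, $\Omega_2=(p_2-B_2)/I_{22}$, so $(\Omega_1,\Omega_2)$ serve as coordinates on $\widehat{\mathcal{D}^*}$. The reduced equations are $\dot\Omega_1=-\frac{1}{I_{11}}(I_{13}\Omega_1+I_{23}\Omega_2+B_3)\Omega_2$, $\dot\Omega_2=\frac{1}{I_{22}}(I_{13}\Omega_1+I_{23}\Omega_2+B_3)\Omega_1$, Hamiltonian with respect to this bracket and $H=\frac12(I_{11}\Omega_1^2+I_{22}\Omega_2^2)$. *)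

(* Defs.v *)
From HB Require Import structures.
From mathcomp Require Import all_boot all_order all_algebra.
From mathcomp Require Import all_classical all_reals all_analysis.
Set Implicit Arguments.
Unset Strict Implicit.
Unset Printing Implicit Defensive.
Import Order.TTheory GRing.Theory Num.Theory.
Import numFieldNormedType.Exports.
Local Open Scope ring_scope.

Section SuslovDefs.
Variable R : realType.

(* Body-frame vectors (angular velocities) and covectors (momenta) are
   row vectors of R^3; indices 0,1,2 stand for the paper's 1,2,3. *)
Definition i0 : 'I_3 := @Ordinal 3 0 isT.
Definition i1 : 'I_3 := @Ordinal 3 1 isT.
Definition i2 : 'I_3 := @Ordinal 3 2 isT.
Definition j0 : 'I_2 := @Ordinal 2 0 isT.
Definition j1 : 'I_2 := @Ordinal 2 1 isT.

Definition evec (i : 'I_3) : 'rV[R]_3 := delta_mx 0 i.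
Definition dotv (u v : 'rV[R]_3) : R := \sum_i u 0 i * v 0 i.
Definition crossv (u v : 'rV[R]_3) : 'rV[R]_3 :=
  \row_k (if k == i0 then u 0 i1 * v 0 i2 - u 0 i2 * v 0 i1
          else if k == i1 then u 0 i2 * v 0 i0 - u 0 i0 * v 0 i2
          else u 0 i0 * v 0 i1 - u 0 i1 * v 0 i0).

Definition hat (w : 'rV[R]_3) : 'M[R]_3 :=
  \matrix_(i < 3, j < 3)
    match nat_of_ord i, nat_of_ord j with
    | 0, 1 => - w 0 i2 | 0, 2 => w 0 i1
    | 1, 0 => w 0 i2   | 1, 2 => - w 0 i0
    | 2, 0 => - w 0 i1 | 2, 1 => w 0 i0
    | _, _ => 0 end.

Definition is_SO3 (g : 'M[R]_3) : Prop := g *m g^T = 1 /\ \det g = 1.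

(* Cayley transform so(3) -> SO(3); t |-> g * cayley (t * hat w) is a curve
   in SO(3) through g with velocity g * hat w. *)
Definition cayley (A : 'M[R]_3) : 'M[R]_3 :=
  invmx (1 - (2 : R)^-1 *: A) *m (1 + (2 : R)^-1 *: A).

(* T*SO(3) in the left trivialization: a point is (g, M), g in SO(3),
   M the body momentum (alpha_g(g hat xi) = M . xi).  Functions on T*Q are
   represented as F : 'M_3 -> 'rV_3 -> R (only values with g in SO(3) matter). *)
Definition gder (F : 'M[R]_3 -> 'rV[R]_3 -> R) (i : 'I_3) g M : R :=
  derive1 (fun t : R => F (g *m cayley (t *: hat (evec i))) M) 0.
Definition mder (F : 'M[R]_3 -> 'rV[R]_3 -> R) (i : 'I_3) g M : R :=
  derive1 (fun t : R => F g (M + t *: evec i)) 0.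
Definition gradM (F : 'M[R]_3 -> 'rV[R]_3 -> R) g M : 'rV[R]_3 :=
  \row_i mder F i g M.

(* Canonical Poisson bracket of T*SO(3), written in the left trivialization
   (convention {q,p} = 1, df/dt = {f,H}). *)
Definition canbr (F H : 'M[R]_3 -> 'rV[R]_3 -> R) g M : R :=
  \sum_i (gder F i g M * mder H i g M - mder F i g M * gder H i g M)
  - dotv M (crossv (gradM F g M) (gradM H g M)).

Definition inertia (I11 I22 I33 I13 I23 : R) : 'M[R]_3 :=
  \matrix_(i < 3, j < 3)
    match nat_of_ord i, nat_of_ord j with
    | 0, 0 => I11 | 1, 1 => I22 | 2, 2 => I33
    | 0, 2 => I13 | 2, 0 => I13
    | 1, 2 => I23 | 2, 1 => I23
    | _, _ => 0 end.

Definition posdef (Im : 'M[R]_3) : Prop :=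
  forall v : 'rV[R]_3, v != 0 -> 0 < dotv v (v *m Im).

Definition gmetric (Im : 'M[R]_3) (u w : 'rV[R]_3) : R := dotv u (w *m Im).

(* Constraint distribution D : Omega_3 = 0 (left invariant, body frame). *)
Definition inD (u : 'rV[R]_3) : Prop := u 0 i2 = 0.
Definition inDperp (Im : 'M[R]_3) (w : 'rV[R]_3) : Prop :=
  forall u, inD u -> gmetric Im u w = 0.
(* D^* identified with the annihilator of D^perp. *)
Definition inDstar (Im : 'M[R]_3) (m : 'rV[R]_3) : Prop :=
  forall w, inDperp Im w -> dotv m w = 0.
(* The complementary summand (D^perp)^* = annihilator of D. *)
Definition inDperpstar (m : 'rV[R]_3) : Prop :=
  forall u, inD u -> dotv m u = 0.

(* i_D^* : projection T*Q -> D^* along the decomposition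
   T*Q = D^* (+) (D^perp)^* ; characterized by its defining property. *)
Definition is_iDstar (Im : 'M[R]_3) (iD : 'rV[R]_3 -> 'rV[R]_3) : Prop :=
  forall M, inDstar Im (iD M) /\ inDperpstar (M - iD M).

(* eta = eta^par + eta^perp with eta^par in D^*, eta^perp in (D^perp)^*;
   the gyroscopic 1-form eta has body components B. *)
Definition is_etaperp (Im : 'M[R]_3) (B etaperp : 'rV[R]_3) : Prop :=
  inDperpstar etaperp /\ inDstar Im (B - etaperp).

Definition omega_coord (Im : 'M[R]_3) (B m : 'rV[R]_3) : 'rV[R]_2 :=
  \row_k (if k == j0 then (dotv m (evec i0) - B 0 i0) / Im i0 i0
          else (dotv m (evec i1) - B 0 i1) / Im i1 i1).

(* Nonholonomic bracket on D^* of the pullbacks phi o pi, psi o pi of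
   functions on D^*/SO(3) (written in the coordinates Omega),
   evaluated at the point (g, m) of D^*:
   {phi o pi o i_D^*, psi o pi o i_D^*} at (g, m + eta^perp). *)
Definition nh_bracket (Im : 'M[R]_3) (B : 'rV[R]_3) (iD : 'rV[R]_3 -> 'rV[R]_3)
  (etaperp : 'rV[R]_3) (phi psi : 'rV[R]_2 -> R) (g : 'M[R]_3) (m : 'rV[R]_3) : R :=
  canbr (fun _ M => phi (omega_coord Im B (iD M)))
        (fun _ M => psi (omega_coord Im B (iD M))) g (m + etaperp).

Definition pd2 (phi : 'rV[R]_2 -> R) (k : 'I_2) (x : 'rV[R]_2) : R :=
  derive1 (fun t : R => phi (x + t *: delta_mx 0 k)) 0.

Definition bracket_R2 (c : 'rV[R]_2 -> R) (phi psi : 'rV[R]_2 -> R)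
  (x : 'rV[R]_2) : R :=
  c x * (pd2 phi j0 x * pd2 psi j1 x - pd2 phi j1 x * pd2 psi j0 x).

Definition suslov_c (I11 I22 I13 I23 : R) (B : 'rV[R]_3) (x : 'rV[R]_2) : R :=
  - (I13 * x 0 j0 + I23 * x 0 j1 + B 0 i2) / (I11 * I22).

End SuslovDefs.

(* Main.v *)
Require Import Defs.
From HB Require Import structures.
From mathcomp Require Import all_boot all_order all_algebra.
From mathcomp Require Import all_classical all_reals all_analysis.
From mathcomp Require Import ring lra.
Import Order.TTheory GRing.Theory Num.Theory.
Import numFieldNormedType.Exports.
Local Open Scope ring_scope.

Section S.
Variable R : realType.

Lemma sum3 (F : 'I_3 -> R) : \sum_i F i = F i0 + F i1 + F i2.
Proof.
rewrite !big_ord_recr big_ord0 /= GRing.add0r.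
by congr (F _ + F _ + F _); apply: val_inj.
Qed.

Lemma ord3 (k : 'I_3) : k = i0 \/ k = i1 \/ k = i2.
Proof.
case: k => [[|[|[|//]]] hk]; [left|right;left|right;right]; exact: val_inj.
Qed.

Lemma ord2 (k : 'I_2) : k = j0 \/ k = j1.
Proof.
case: k => [[|[|//]] hk]; [left|right]; exact: val_inj.
Qed.

Lemma dotvE (u v : 'rV[R]_3) :
  dotv u v = u 0 i0 * v 0 i0 + u 0 i1 * v 0 i1 + u 0 i2 * v 0 i2.
Proof. by rewrite /dotv sum3. Qed.

Lemma mulE (u : 'rV[R]_3) (A : 'M[R]_3) j :
  (u *m A) 0 j = u 0 i0 * A i0 j + u 0 i1 * A i1 j + u 0 i2 * A i2 j.
Proof. by rewrite mxE sum3. Qed.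

Lemma evecE i j : evec R i 0 j = (j == i)%:R :> R.
Proof. by rewrite /evec mxE eqxx. Qed.

Lemma dotv_evec (u : 'rV[R]_3) i : dotv u (evec R i) = u 0 i.
Proof.
rewrite dotvE !evecE.
case: (ord3 i) => [->|[->|->]] /=; rewrite ?mulr1 ?mulr0 ?addr0 ?add0r //.
Qed.


Lemma dirder (phi : 'rV[R]_2 -> R) x v :
  derive1 (fun t : R => phi (x + t *: v)) 0 = derive phi x v.
Proof.
rewrite /derive1 /derive; set d := (fun _ : R => _); set d' := (fun _ : R => _).
suff -> : d = d' by [].
apply: funext => h; rewrite /d /d' /=.
by rewrite addr0 scale0r addr0 (addrC x).
Qed.

Lemma dirlin (phi : 'rV[R]_2 -> R) x a b :
  differentiable phi x ->
  derive phi x (a *: delta_mx 0 j0 + b *: delta_mx 0 j1) =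
  a * pd2 phi j0 x + b * pd2 phi j1 x.
Proof.
move=> dp; rewrite /pd2 !dirder !deriveE // linearD !linearZ.
by [].
Qed.

Variables (I11 I22 I33 I13 I23 : R) (B : 'rV[R]_3).
Let Im := inertia I11 I22 I33 I13 I23.

Lemma omega0 (M : 'rV[R]_3) : omega_coord Im B M 0 j0 = (M 0 i0 - B 0 i0) / I11.
Proof. by rewrite /omega_coord !mxE /= dotv_evec. Qed.
Lemma omega1 (M : 'rV[R]_3) : omega_coord Im B M 0 j1 = (M 0 i1 - B 0 i1) / I22.
Proof. by rewrite /omega_coord !mxE /= dotv_evec. Qed.

Lemma omega_ext (M N : 'rV[R]_3) : M 0 i0 = N 0 i0 -> M 0 i1 = N 0 i1 ->
  omega_coord Im B M = omega_coord Im B N.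
Proof. by move=> h0 h1; rewrite /omega_coord !dotv_evec h0 h1. Qed.

Lemma iD_comp (iD : 'rV[R]_3 -> 'rV[R]_3) : is_iDstar Im iD -> forall M : 'rV[R]_3, iD M 0 i0 = M 0 i0 /\ iD M 0 i1 = M 0 i1.
Proof.
move=> hiD M; have [_ h] := hiD M.
have inD0 : inD (evec R i0) by rewrite /inD evecE.
have inD1 : inD (evec R i1) by rewrite /inD evecE.
move: (h _ inD0) (h _ inD1); rewrite !dotv_evec !mxE => e0 e1.
by split; apply/eqP; rewrite eq_sym -subr_eq0; apply/eqP.
Qed.

Lemma mder_formula (iD : 'rV[R]_3 -> 'rV[R]_3) (phi : 'rV[R]_2 -> R) (g : 'M[R]_3) (M : 'rV[R]_3) i :
  I11 != 0 -> I22 != 0 ->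
  is_iDstar Im iD -> (forall x, differentiable phi x) ->
  mder (fun _ M => phi (omega_coord Im B (iD M))) i g M =
  evec R i 0 i0 / I11 * pd2 phi j0 (omega_coord Im B M) +
  evec R i 0 i1 / I22 * pd2 phi j1 (omega_coord Im B M).
Proof.
move=> n1 n2 hiD dphi; rewrite /mder -dirlin //.
rewrite -dirder; congr derive1; apply: funext => t; congr phi.
have [h0 h1] := iD_comp iD hiD (M + t *: evec R i).
rewrite (omega_ext _ _ h0 h1).
apply/rowP => k; case: (ord2 k) => ->;
  rewrite ?omega0 ?omega1 !mxE /= ?dotv_evec; field; by rewrite ?n1 ?n2.
Qed.

Lemma gder_const (f : 'rV[R]_3 -> R) i g M :
  gder (fun _ M => f M) i g M = 0.
Proof. rewrite /gder; exact: derive1_cst. Qed.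

End S.

Theorem theorem6p1 (R : realType) (I11 I22 I33 I13 I23 : R) (B : 'rV[R]_3)
    (iD : 'rV[R]_3 -> 'rV[R]_3) (etaperp : 'rV[R]_3) :
  posdef (inertia I11 I22 I33 I13 I23) ->
  is_iDstar (inertia I11 I22 I33 I13 I23) iD ->
  is_etaperp (inertia I11 I22 I33 I13 I23) B etaperp ->
  forall phi psi : 'rV[R]_2 -> R,
  (forall x, differentiable phi x) -> (forall x, differentiable psi x) ->
  forall (g : 'M[R]_3) (m : 'rV[R]_3),
  is_SO3 g -> inDstar (inertia I11 I22 I33 I13 I23) m ->
  nh_bracket (inertia I11 I22 I33 I13 I23) B iD etaperp phi psi g m =
  bracket_R2 (suslov_c I11 I22 I13 I23 B) phi psi
    (omega_coord (inertia I11 I22 I33 I13 I23) B m).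
Proof.
move=> hpos hiD [hep hBe] phi psi dphi dpsi g m _ hm.
have evec_neq0 i : evec R i != 0.
  apply/eqP => h; have := congr1 (fun v : 'rV[R]_3 => v 0 i) h.
  by rewrite evecE mxE eqxx => /eqP; rewrite oner_eq0.
have p0 := hpos _ (evec_neq0 i0).
have p1 := hpos _ (evec_neq0 i1).
rewrite !dotvE !mulE !evecE !mxE /= in p0 p1.
have n1 : I11 != 0 by apply/negP => /eqP h; rewrite h in p0; lra.
have n2 : I22 != 0 by apply/negP => /eqP h; rewrite h in p1; lra.
have inD0 : inD (evec R i0) by rewrite /inD evecE.
have inD1 : inD (evec R i1) by rewrite /inD evecE.
have e0 := hep _ inD0; have e1 := hep _ inD1.
rewrite !dotv_evec in e0 e1.
pose w : 'rV[R]_3 := \row_k (if k == i0 then - I13 * I22 else if k == i1 then - I23 * I11 else I11 * I22).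
have hw : inDperp (inertia I11 I22 I33 I13 I23) w.
  move=> u; rewrite /inD /gmetric dotvE !mulE !mxE /= => ->.
  ring.
have k1 := hm _ hw; have k2 := hBe _ hw.
rewrite !dotvE !mxE /= e0 e1 in k1 k2.
have hx : omega_coord (inertia I11 I22 I33 I13 I23) B (m + etaperp) =
          omega_coord (inertia I11 I22 I33 I13 I23) B m.
  by apply: omega_ext; rewrite mxE ?e0 ?e1 addr0.
rewrite /nh_bracket /canbr big1; last by move=> i _; rewrite !gder_const; ring.
rewrite dotvE /crossv !mxE /=.
rewrite !mder_formula // hx !evecE /=.
rewrite /bracket_R2 /suslov_c omega0 omega1.
have kk : I11 * I22 * (m 0 i2 + etaperp 0 i2) =
   I11 * I22 * B 0 i2 + I13 * I22 * (m 0 i0 - B 0 i0) + I23 * I11 * (m 0 i1 - B 0 i1).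
  move: k1 k2; rewrite !(mulr0, mul0r, mulr1, addr0, add0r, subr0) => k1 k2.
  lra.
have key : m 0 i2 + etaperp 0 i2 =
   B 0 i2 + I13 * ((m 0 i0 - B 0 i0) / I11) + I23 * ((m 0 i1 - B 0 i1) / I22).
  apply: (mulfI (mulf_neq0 n1 n2)); rewrite kk; field; by rewrite ?n1 ?n2.
rewrite key; field; by rewrite ?n1 ?n2.
Qed.
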